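(* Let $R$ be a Noetherian ring and let $R_0$ be an elementary substructure of $R$ (in the language of rings). Then $R_0$ is Noetherian.
   Context: Rings are commutative and unital. *)

(* Defs.v *)
From HB Require Import structures.
From mathcomp Require Import all_boot all_algebra.
Set Implicit Arguments. Unset Strict Implicit. Unset Printing Implicit Defensive.
Import GRing.Theory.
Local Open Scope ring_scope.

Inductive rterm : Type :=
  | RVar of nat
  | RZero
  | ROne
  | RAdd of rterm & rterm
  | ROpp of rterm
  | RMul of rterm & rterm.

Inductive rformula : Type :=
  | FTrue
  | FFalse
  | FEq of rterm & rterm
  | FNot of rformula
  | FAnd of rformula & rformula
  | FOr of rformula & rformula
  | FImp of rformula & rformula
  | FExists of nat & rformula
  | FForall of nat & rformula.

Definition upd (R : Type) (e : nat -> R) (i : nat) (x : R) : nat -> R :=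
  fun j => if j == i then x else e j.

Fixpoint reval (R : comPzRingType) (e : nat -> R) (t : rterm) : R :=
  match t with
  | RVar i => e i
  | RZero => 0
  | ROne => 1
  | RAdd t1 t2 => reval e t1 + reval e t2
  | ROpp t1 => - reval e t1
  | RMul t1 t2 => reval e t1 * reval e t2
  end.

Fixpoint rholds (R : comPzRingType) (e : nat -> R) (f : rformula) : Prop :=
  match f with
  | FTrue => True
  | FFalse => False
  | FEq t1 t2 => reval e t1 = reval e t2
  | FNot g => ~ rholds e g
  | FAnd g h => rholds e g /\ rholds e h
  | FOr g h => rholds e g \/ rholds e h
  | FImp g h => rholds e g -> rholds e h
  | FExists i g => exists x : R, rholds (upd e i x) g
  | FForall i g => forall x : R, rholds (upd e i x) g
  end.

(* R0 is (identified via the injective ring morphism f with) an elementary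
   substructure of R. *)
Definition elementary_embedding (R0 R : comPzRingType) (f : R0 -> R) : Prop :=
  forall (phi : rformula) (e : nat -> R0), rholds e phi <-> rholds (f \o e) phi.

Definition is_ideal (R : comPzRingType) (I : R -> Prop) : Prop :=
  [/\ I 0,
      (forall x y, I x -> I y -> I (x + y)) &
      (forall r x, I x -> I (r * x))].

Definition noetherian (R : comPzRingType) : Prop :=
  forall I : nat -> R -> Prop,
    (forall n, is_ideal (I n)) ->
    (forall n x, I n x -> I n.+1 x) ->
    exists N, forall n, (N <= n)%N -> forall x, I n x <-> I N x.

(* Main.v *)
Require Import Defs.
From HB Require Import structures.
From mathcomp Require Import all_boot all_algebra.
From mathcomp Require Import zify.
Set Implicit Arguments. Unset Strict Implicit. Unset Printing Implicit Defensive.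
Import GRing.Theory.
Local Open Scope ring_scope.

Fixpoint psi (k : nat) : rformula :=
  match k with
  | 0 => FEq (RVar 0) RZero
  | k'.+1 => FExists (3*k' + 2) (FExists (3*k')
      (FAnd (psi k') (FEq (RVar (3*k'.+1))
         (RAdd (RMul (RVar (3*k'+2)) (RVar (3*k'+1))) (RVar (3*k'))))))
  end.

Lemma upd_neq (T : Type) (e : nat -> T) i x j : j != i -> upd e i x j = e j.
Proof. by move=> H; rewrite /upd (negbTE H). Qed.

Lemma upd_eq (T : Type) (e : nat -> T) i x : upd e i x i = x.
Proof. by rewrite /upd eqxx. Qed.

Lemma psi_sound (R0 : comPzRingType) (I : R0 -> Prop) : is_ideal I ->
  forall k (e : nat -> R0), (forall i, (i < k)%N -> I (e (3*i+1)%N)) ->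
  rholds e (psi k) -> I (e (3*k)%N).
Proof.
case=> I0 ID IM; elim=> [|k IH] e He /=.
  by rewrite muln0 => ->.
move=> [r [z [H Heq]]].
have F1 : (3*k.+1 == 3*k)%N = false by lia.
have F2 : (3*k.+1 == 3*k+2)%N = false by lia.
have F3 : (3*k+2 == 3*k)%N = false by lia.
have F4 : (3*k+1 == 3*k)%N = false by lia.
have F5 : (3*k+1 == 3*k+2)%N = false by lia.
rewrite /upd F1 F2 F3 F4 F5 !eqxx in Heq.
rewrite Heq; apply: ID; first by apply: IM; apply: He.
have := IH _ _ H; rewrite upd_eq; apply=> i Hi.
rewrite upd_neq; last by lia.
rewrite upd_neq; last by lia.
by apply: He; lia.
Qed.

Lemma psi_complete (R : comPzRingType) (c : nat -> R) k (e : nat -> R) :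
  e (3*k)%N = \sum_(i < k) c i * e (3*i+1)%N -> rholds e (psi k).
Proof.
elim: k e => [|k IH] e /=.
  by rewrite muln0 big_ord0.
move=> H.
exists (c k); exists (\sum_(i < k) c i * e (3*i+1)%N); split.
  apply: IH; rewrite upd_eq; apply: eq_bigr => i _.
  rewrite upd_neq; last by have := ltn_ord i; lia.
  rewrite upd_neq //; have := ltn_ord i; lia.
have F1 : (3*k.+1 == 3*k)%N = false by lia.
have F2 : (3*k.+1 == 3*k+2)%N = false by lia.
have F3 : (3*k+2 == 3*k)%N = false by lia.
have F4 : (3*k+1 == 3*k)%N = false by lia.
have F5 : (3*k+1 == 3*k+2)%N = false by lia.
rewrite /= /upd F1 F2 F3 F4 F5 !eqxx H big_ord_recr /= addrC.
by [].
Qed.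

Section Lin.
Variables (R0 R : comPzRingType) (f : R0 -> R).
Definition lin (l : seq (R * R0)) : R := foldr (fun p acc => p.1 * f p.2 + acc) 0 l.

Lemma lin_cat l1 l2 : lin (l1 ++ l2) = lin l1 + lin l2.
Proof. by elim: l1 => [|p l IH] /=; rewrite ?add0r // IH addrA. Qed.

Lemma lin_map r l : lin (map (fun p => (r * p.1, p.2)) l) = r * lin l.
Proof. by elim: l => [|p l IH] /=; rewrite ?mulr0 // IH mulrDr mulrA. Qed.

Lemma lin_sum l : lin l = \sum_(i < size l) (nth (0,0) l i).1 * f (nth (0,0) l i).2.
Proof. by elim: l => [|p l IH] /=; rewrite ?big_ord0 // big_ord_recl IH. Qed.
End Lin.

Theorem proposition7p12 (R0 R : comPzRingType) (f : {rmorphism R0 -> R}) :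
  injective f -> elementary_embedding f -> noetherian R -> noetherian R0.
Proof.
move=> _ Hel HR I HI Hasc.
pose J n (z : R) := exists l : seq (R * R0),
  (forall i, (i < size l)%N -> I n (nth (0,0) l i).2) /\ z = lin f l.
have HJ : forall n, is_ideal (J n).
  move=> n; case: (HI n) => I0 ID IM; split.
  - by exists [::]; split.
  - move=> x y [l1 [H1 ->]] [l2 [H2 ->]]; exists (l1 ++ l2); split; last by rewrite lin_cat.
    move=> i; rewrite size_cat nth_cat; case: ifP => Hi Hs; first exact: H1.
    apply: H2; move: Hs (negbT Hi); move: (size l1) (size l2) => a b; lia.
  - move=> r x [l [H ->]]; exists (map (fun p => (r * p.1, p.2)) l); split; last by rewrite lin_map.
    move=> i; rewrite size_map => Hi; rewrite (nth_map (0,0)) //; exact: H.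
have HJa : forall n x, J n x -> J n.+1 x.
  by move=> n x [l [H ->]]; exists l; split => // i Hi; apply: Hasc; apply: H.
have [N HN] := HR J HJ HJa.
exists N => n Hn x; split; last first.
  move: Hn; elim: n => [|n IHn]; first by rewrite leqn0 => /eqP ->.
  rewrite leq_eqVlt => /orP [/eqP <- //|]; rewrite ltnS => Hn Hx.
  by apply: Hasc; apply: IHn.
move=> Hx.
have : J n (f x).
  exists [:: (1, x)]; split; last by rewrite /= mul1r addr0.
  by case=> //.
move/(HN n Hn) => [l [Hl Hfx]].
pose k := size l.
pose e0 := fun j : nat => if j == (3*k)%N then x else (nth (0,0) l ((j-1) %/ 3)).2.
have e0k : e0 (3*k)%N = x by rewrite /e0 eqxx.
have e0i : forall i, (i < k)%N -> e0 (3*i+1)%N = (nth (0,0) l i).2.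
  move=> i Hi; rewrite /e0; have -> : (3*i+1 == 3*k)%N = false by lia.
  by have -> : ((3*i+1-1) %/ 3 = i)%N by rewrite addnK mulKn.
have Hphi : rholds (f \o e0) (psi k).
  apply: (@psi_complete R (fun i => (nth (0,0) l i).1) k (f \o e0)).
  rewrite /= e0k Hfx lin_sum; apply: eq_bigr => i _.
  by rewrite /= e0i.
move/Hel: Hphi => Hphi.
rewrite -e0k; apply: (psi_sound (HI N)) Hphi => i Hi.
rewrite e0i //; exact: Hl.
Qed.
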